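(* Let $E\subset F$ be differential fields of characteristic zero with the same algebraically closed field of constants $C$. Suppose there is $x\in E$ with $x'=1$, and let $y,z\in F$ be such that $y'\in E$, $y$ is transcendental over $E$, $z\in E(y)$ and $z'=y$. Then $z=Ay+B$ for some $A,B\in E$. *)

(* Defs.v *)
From HB Require Import structures.
From mathcomp Require Import all_boot all_order all_algebra.
Set Implicit Arguments. Unset Strict Implicit. Unset Printing Implicit Defensive.
Import Order.TTheory GRing.Theory Num.Theory.
Local Open Scope ring_scope.

Definition derivation (F : ringType) (D : F -> F) : Prop :=
  (forall a b, D (a + b) = D a + D b) /\
  (forall a b, D (a * b) = D a * b + a * D b).

Definition is_subfield (F : fieldType) (E : pred F) : Prop :=
  [/\ 0 \in E, 1 \in E,
      (forall a b, a \in E -> b \in E -> a - b \in E),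
      (forall a b, a \in E -> b \in E -> a * b \in E) &
      (forall a, a \in E -> a^-1 \in E)].

Definition is_diff_subfield (F : fieldType) (D : F -> F) (E : pred F) : Prop :=
  is_subfield E /\ (forall a, a \in E -> D a \in E).

Definition coefs_in (F : fieldType) (E : pred F) (p : {poly F}) : Prop :=
  forall i, p`_i \in E.

Definition constants_alg_closed (F : fieldType) (D : F -> F) : Prop :=
  forall p : {poly F}, (forall i, D p`_i = 0) -> (1 < size p)%N ->
    exists c, D c = 0 /\ root p c.

Definition transcendental_over (F : fieldType) (E : pred F) (y : F) : Prop :=
  forall p : {poly F}, coefs_in E p -> p.[y] = 0 -> p = 0.

Definition in_adjoin (F : fieldType) (E : pred F) (y z : F) : Prop :=
  exists p q : {poly F}, [/\ coefs_in E p, coefs_in E q, q.[y] != 0 &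
                             z = p.[y] / q.[y]].

(* Main.v *)
Require Import Defs.
From HB Require Import structures.
From mathcomp Require Import all_boot all_order all_algebra.
From mathcomp Require Import ring zify.
Import Order.TTheory GRing.Theory Num.Theory.
Local Open Scope ring_scope.

Section Aux.
Set Implicit Arguments.
Variables (F : fieldType) (D : F -> F) (E : pred F).
Hypothesis hD : derivation D.
Hypothesis hE : is_diff_subfield D E.

Lemma D0 : D 0 = 0.
Proof. have := (proj1 hD) 0 0; rewrite addr0 => H. by apply: (addrI (D 0)); rewrite addr0 -H. Qed.
Lemma DD a b : D (a + b) = D a + D b. Proof. exact: (proj1 hD). Qed.
Lemma DM a b : D (a * b) = D a * b + a * D b. Proof. exact: (proj2 hD). Qed.
Lemma D1 : D 1 = 0.
Proof. have := DM 1 1; rewrite !mul1r mulr1 => H. by apply: (addrI (D 1)); rewrite addr0 -H. Qed.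
Lemma DN a : D (- a) = - D a.
Proof. apply/eqP; rewrite -subr_eq0 opprK -DD addNr D0 //. Qed.
Lemma DB a b : D (a - b) = D a - D b. Proof. by rewrite DD DN. Qed.
Lemma DMn a n : D (a *+ n) = D a *+ n.
Proof. elim: n => [|n IH]; first by rewrite !mulr0n D0. by rewrite !mulrS DD IH. Qed.
Lemma DX a n : D (a ^+ n.+1) = (a ^+ n) *+ n.+1 * D a.
Proof. elim: n => [|n IH]; first by rewrite expr1 expr0 mul1r.
rewrite exprS DM IH mulrA mulrnAr -exprS [D a * _]mulrC [in RHS]mulrS mulrDl. by []. Qed.

Lemma EsubF : is_subfield E. Proof. exact: (proj1 hE). Qed.
Lemma E0 : 0 \in E. Proof. by case: EsubF. Qed.
Lemma E1 : 1 \in E. Proof. by case: EsubF. Qed.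
Lemma EB a b : a \in E -> b \in E -> a - b \in E. Proof. by case: EsubF => _ _ H _ _; apply: H. Qed.
Lemma EM a b : a \in E -> b \in E -> a * b \in E. Proof. by case: EsubF => _ _ _ H _; apply: H. Qed.
Lemma EV a : a \in E -> a^-1 \in E. Proof. by case: EsubF => _ _ _ _ H; apply: H. Qed.
Lemma EN a : a \in E -> - a \in E. Proof. by move=> h; rewrite -sub0r; apply: EB => //; apply: E0. Qed.
Lemma ED a b : a \in E -> b \in E -> a + b \in E. Proof. by move=> ha hb; rewrite -(opprK b); apply: EB => //; apply: EN. Qed.
Lemma EMn a n : a \in E -> a *+ n \in E.
Proof. move=> ha; elim: n => [|n IH]; first by rewrite mulr0n E0. by rewrite mulrS ED. Qed.
Lemma EDer a : a \in E -> D a \in E. Proof. exact: (proj2 hE). Qed.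

Definition Dp (a : F) (P : {poly F}) := map_poly D P + a *: P^`().

Lemma coef_Dp a P i : (Dp a P)`_i = D P`_i + a * (P`_i.+1 *+ i.+1).
Proof. by rewrite /Dp coefD coef_map_id0 ?D0 // coefZ coef_deriv. Qed.

Lemma size_Dp a P : (size (Dp a P) <= size P)%N.
Proof.
apply/leq_sizeP => j hj; rewrite coef_Dp !nth_default ?D0 ?mul0rn ?mulr0 ?addr0 //.
exact: leq_trans hj _.
Qed.

Lemma map_DMXaddC Q c :
  map_poly D (Q * 'X + c%:P) = map_poly D Q * 'X + (D c)%:P.
Proof.
apply/polyP => i; rewrite coef_map_id0 ?D0 // !coefD coefMX !coefC.
case: i => [|i] /=; first by rewrite coefMX /= !add0r.
by rewrite coefMX /= !addr0 coef_map_id0 ?D0.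
Qed.

Lemma horner_Dp y P : D P.[y] = (Dp (D y) P).[y].
Proof.
elim/poly_ind: P => [|Q c IH].
  by rewrite /Dp horner0 D0 map_poly0 deriv0 scaler0 addr0 horner0.
rewrite hornerMXaddC DD DM IH /Dp map_DMXaddC derivMXaddC.
rewrite !(hornerD, hornerZ, hornerMXaddC, hornerM, hornerX, hornerC).
rewrite !mulrDl !mulrDr; ring.
Qed.

Lemma ci_D P Q : coefs_in E P -> coefs_in E Q -> coefs_in E (P + Q).
Proof. by move=> hP hQ i; rewrite coefD ED. Qed.
Lemma ci_B P Q : coefs_in E P -> coefs_in E Q -> coefs_in E (P - Q).
Proof. by move=> hP hQ i; rewrite coefB EB. Qed.
Lemma ci_C c : c \in E -> coefs_in E c%:P.
Proof. by move=> hc i; rewrite coefC; case: (i == 0)%N => //; exact: E0. Qed.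
Lemma ci_0 : coefs_in E 0.
Proof. by rewrite -polyC0; apply: ci_C; exact: E0. Qed.
Lemma ci_Xn k : coefs_in E 'X^k.
Proof. by move=> i; rewrite coefXn; case: (i == k) => /=; [exact: E1 | exact: E0]. Qed.
Lemma ci_X : coefs_in E 'X.
Proof. by move=> i; rewrite coefX; case: (i == 1)%N => /=; [exact: E1 | exact: E0]. Qed.
Lemma ci_M P Q : coefs_in E P -> coefs_in E Q -> coefs_in E (P * Q).
Proof.
move=> hP hQ i; rewrite coefM; apply: (big_ind (fun u => u \in E)).
- exact: E0.
- exact: ED.
- by move=> j _; apply: EM.
Qed.
Lemma ci_Z c P : c \in E -> coefs_in E P -> coefs_in E (c *: P).
Proof. by move=> hc hP i; rewrite coefZ EM. Qed.
Lemma ci_Dp a P : a \in E -> coefs_in E P -> coefs_in E (Dp a P).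
Proof. by move=> ha hP i; rewrite coef_Dp ED ?EDer ?EM ?EMn. Qed.


Lemma ci_div q : coefs_in E q -> q != 0 -> forall n (p : {poly F}), (size p <= n)%N -> coefs_in E p ->
  exists P r, [/\ coefs_in E P, coefs_in E r, p = P * q + r & (size r < size q)%N].
Proof.
move=> hq q0; elim=> [|n IH] p hs hp; rewrite -/(coefs_in E p) in hp.
  exists 0, p; split => //; first exact: ci_0; first by rewrite mul0r add0r.
  by apply: leq_ltn_trans hs _; rewrite size_poly_gt0.
case: (ltnP (size p) (size q)) => hpq.
  by exists 0, p; split => //; [exact: ci_0 | rewrite mul0r add0r].
have sq0 : (0 < size q)%N by rewrite size_poly_gt0.
set k := (size p - size q)%N.
set c := lead_coef p / lead_coef q.
have lq0 : lead_coef q != 0 by rewrite lead_coef_eq0.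
have hc : c \in E by rewrite /c !lead_coefE; apply: EM; [exact: hp | apply: EV; exact: hq].
set p1 := p - (c *: 'X^k) * q.
have hp1 : coefs_in E p1 by apply: ci_B => //; apply: ci_M => //; apply: ci_Z => //; exact: ci_Xn.
have hs1 : (size p1 <= n)%N.
  have : (size p1 <= (size p).-1)%N.
    apply/leq_sizeP => j hj.
    rewrite /p1 coefB -scalerAl coefZ coefXnM.
    have -> : (j < k)%N = false by apply/negbTE; rewrite -leqNgt; rewrite /k; lia.
    case: (ltngtP j (size p).-1) => hj2.
    - lia.
    - have h1 : (size p <= j)%N by lia.
      have h2 : (size q <= j - k)%N by rewrite /k; lia.
      by rewrite !nth_default ?mulr0 ?subr0.
    - have -> : (j - k = (size q).-1)%N by rewrite /k; lia.
      by rewrite hj2 -!lead_coefE /c divfK // subrr.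
  lia.
have [P1 [r [hP1 hr e1 hr1]]] := IH p1 hs1 hp1.
exists (P1 + c *: 'X^k), r; split => //.
  by apply: ci_D => //; apply: ci_Z => //; exact: ci_Xn.
by rewrite mulrDl -addrAC -e1 /p1 subrK.
Qed.

End Aux.

Theorem lemma30 (F : fieldType) (D : F -> F) (E : pred F)
  (hD : derivation D)
  (hchar : [pchar F] =i pred0)
  (hE : is_diff_subfield D E)
  (hconst : forall c, D c = 0 -> c \in E)
  (hC : constants_alg_closed D)
  (x : F) (hxE : x \in E) (hx : D x = 1)
  (y z : F) (hy : D y \in E) (htr : transcendental_over E y)
  (hz : in_adjoin E y z) (hzy : D z = y) :
  exists A B, [/\ A \in E, B \in E & z = A * y + B].
Proof.
have ha : D y \in E by [].
have [p [q [hp hq hqy hzd]]] := hz.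
have q0 : q != 0 by apply: contraNneq hqy => ->; rewrite horner0.
have [P [r [hP hr ep hrq]]] := ci_div hE hq q0 (size p) (leqnn _) hp.
set rho := r.[y] / q.[y].
have hz2 : z = P.[y] + rho by rewrite hzd ep hornerD hornerM mulrDl mulfK.
have hrr : r.[y] = rho * q.[y] by rewrite /rho divfK.
have hDz : y = (Dp D (D y) P).[y] + D rho by rewrite -{1}hzy hz2 (DD hD) (horner_Dp hD).
have hDr : D r.[y] = D rho * q.[y] + rho * D q.[y] by rewrite hrr (DM hD).
set S := 'X - Dp D (D y) P.
set T := Dp D (D y) r * q - r * Dp D (D y) q.
have hST : S * (q * q) - T = 0.
  apply: htr.
    exact: (ci_B hE (ci_M hE (ci_B hE (ci_X hE) (ci_Dp hD hE _ ha hP)) (ci_M hE hq hq)) (ci_B hE (ci_M hE (ci_Dp hD hE _ ha hr) hq) (ci_M hE hr (ci_Dp hD hE _ ha hq)))).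
  rewrite /S /T; move: hDz (horner_Dp hD y P) (horner_Dp hD y r) (horner_Dp hD y q).
  move: (Dp D (D y) P) (Dp D (D y) r) (Dp D (D y) q) => dP dr dq hDz e1 e2 e3.
  rewrite !(hornerD, hornerN, hornerM, hornerX) -e2 -e3 hDr hrr.
  have -> : y - dP.[y] = D rho by rewrite {1}hDz addrC addKr.
  ring.
have S0 : S = 0.
  apply/eqP; apply: contraT => hS.
  move/eqP: hST; rewrite subr_eq0 => /eqP hST.
  have s1 := size_mul hS (mulf_neq0 q0 q0).
  have s2 := size_mul q0 q0.
  have s3 := size_polyD (Dp D (D y) r * q) (- (r * Dp D (D y) q)).
  rewrite size_polyN in s3.
  have s4 := size_polyMleq (Dp D (D y) r) q.
  have s5 := size_polyMleq r (Dp D (D y) q).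
  have s6 := size_Dp hD (D y) r.
  have s7 := size_Dp hD (D y) q.
  have s8 : (0 < size S)%N by rewrite size_poly_gt0.
  have s9 : (0 < size q)%N by rewrite size_poly_gt0.
  have A1 : (size (Dp D (D y) r * q)%R <= (size r + size q).-1)%N.
    by apply: leq_trans s4 _; rewrite -!subn1 leq_sub2r // leq_add2r.
  have A2 : (size (r * Dp D (D y) q)%R <= (size r + size q).-1)%N.
    by apply: leq_trans s5 _; rewrite -!subn1 leq_sub2r // leq_add2l.
  have A3 : (size (S * (q * q))%R <= (size r + size q).-1)%N.
    rewrite -/T -hST in s3; apply: leq_trans s3 _; by rewrite geq_max A1 A2.
  rewrite s1 s2 in A3; move: A3 s8 s9 hrq; clear; move: (size S) (size q) (size r) => sS sQ sR. lia.
have hXP : Dp D (D y) P = 'X by apply/eqP; rewrite eq_sym -subr_eq0 -/S S0.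
have Drho : D rho = 0.
  by move: hDz; rewrite hXP hornerX => /eqP; rewrite -subr_eq0 opprD addrA subrr sub0r oppr_eq0 => /eqP.
have rhoE := hconst _ Drho.
have sP : (size P <= 2)%N.
  rewrite leqNgt; apply/negP => hs.
  move: (hXP) => /polyP hc.
  have [m hm] : exists m, size P = m.+3 by exists (size P - 3)%N; lia.
  have c1 := hc m.+2; have c2 := hc m.+1.
  rewrite (coef_Dp hD) in c1; rewrite coefX /= in c1; rewrite (coef_Dp hD) in c2; rewrite coefX /= in c2.
  rewrite (nth_default 0 (_ : size P <= m.+3)%N) ?hm // mul0rn mulr0 addr0 in c1.
  set c := P`_m.+2 in c1 c2; set b := P`_m.+1 in c2.
  have cne : c != 0.
    have : lead_coef P != 0 by rewrite lead_coef_eq0 -size_poly_gt0 hm.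
    by rewrite lead_coefE hm.
  have n0 : (m.+2%:R : F) != 0.
    by move/pcharf0P: hchar => ->.
  set k : F := (m == 0)%:R.
  have Dk : D k = 0 by rewrite /k (DMn hD) (D1 hD) mul0rn.
  set w := b + (c *+ m.+2) * y - x * k.
  have Dw : D w = 0.
    rewrite /w (DB hD) (DD hD) !(DM hD) (DMn hD) c1 mul0rn mul0r add0r Dk hx mulr0 addr0 mul1r.
    rewrite /k -c2; ring.
  have wE := hconst _ Dw.
  have yE : y \in E.
    have -> : y = (c *+ m.+2)^-1 * (w - b + x * k).
      rewrite /w -mulr_natr; field.
      apply/andP; split; last exact: cne. by rewrite -(natrD F 2 m).
    apply: (EM hE); first by apply: (EV hE); apply: (EMn hE); apply: hP.
    apply: (ED hE); first by apply: (EB hE) => //; apply: hP.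
    apply: (EM hE) => //; rewrite /k; apply: (EMn hE); exact: (E1 hE).
  have := htr ('X - y%:P) (ci_B hE (ci_X hE) (ci_C hE _ yE)).
  rewrite hornerXsubC subrr => /(_ erefl) /eqP.
  by rewrite -size_poly_eq0 size_XsubC.
exists P`_1, (P`_0 + rho); split.
- exact: hP.
- by apply: (ED hE) => //; exact: hP.
rewrite hz2 (horner_coef_wide _ sP) !big_ord_recr big_ord0 /= add0r expr0 mulr1 expr1.
by rewrite addrC addrA [P`_1 * y + _]addrC.
Qed.
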